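(* Let $h$ be a ternary cubic form whose Hessian $H(h)$ is defined (not identically zero). If $f$ and $g$ are two cubic forms in the pencil $\langle h, H(h)\rangle$ spanned by $h$ and its Hessian, then $R(f,g,-)=0$, i.e. $R(f,g,c)=0$ for every cubic form $c$.
   Context: Let $R\in\bigwedge^3(\mathrm{Sym}^3\mathbb{C}^3)^*$ be the alternating trilinear form on the space $\mathrm{Sym}^3\mathbb{C}^3$ of ternary cubic forms determined by $R(l^3,m^3,n^3)=(\det(l,m,n))^3$ for linear forms $l,m,n$ in $x,y,z$, where $\det(l,m,n)$ is the determinant of the $3\times3$ matrix of their coefficients. The Hessian of a cubic $h$ is $H(h)=\det(\partial^2h/\partial x_i\partial x_j)$. *)

(* Defs.v *)
From HB Require Import structures.
From mathcomp Require Import all_boot all_order all_algebra.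
From mathcomp Require Import complex.
From mathcomp Require Import Rstruct.
From mathcomp Require Import mpoly.
Set Implicit Arguments. Unset Strict Implicit. Unset Printing Implicit Defensive.
Import Order.TTheory GRing.Theory Num.Theory.
Local Open Scope ring_scope.

Definition CC : Type := complex Rdefinitions.R.

Notation poly3 := {mpoly CC[3]}.

(* Ternary cubic forms: homogeneous polynomials of degree 3 (including 0). *)
Definition is_cubic (p : poly3) : Prop := p \is 3.-homog.

Definition linform (v : 'I_3 -> CC) : poly3 := \sum_(i < 3) v i *: 'X_i.

Definition det3 (l m n : 'I_3 -> CC) : CC :=
  \det (\matrix_(i < 3, j < 3)
          (if i == 0 :> nat then l j else if i == 1 :> nat then m j else n j)).

Definition hessian (h : poly3) : poly3 :=
  \det (\matrix_(i < 3, j < 3) mderiv i (mderiv j h)).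

(* Main.v *)
Require Import Defs.
From HB Require Import structures.
From mathcomp Require Import all_boot all_order all_algebra.
From mathcomp Require Import complex Rstruct mpoly.
From mathcomp Require Import ring zify.
Import Order.TTheory GRing.Theory Num.Theory.
Local Open Scope ring_scope.


Lemma det33 (R : comRingType) (A : 'M[R]_3) : \det A =
  A (inord 0) (inord 0) * A (inord 1) (inord 1) * A (inord 2%N) (inord 2%N)
  + A (inord 0) (inord 1) * A (inord 1) (inord 2%N) * A (inord 2%N) (inord 0)
  + A (inord 0) (inord 2%N) * A (inord 1) (inord 0) * A (inord 2%N) (inord 1)
  - A (inord 0) (inord 2%N) * A (inord 1) (inord 1) * A (inord 2%N) (inord 0)
  - A (inord 0) (inord 0) * A (inord 1) (inord 2%N) * A (inord 2%N) (inord 1)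
  - A (inord 0) (inord 1) * A (inord 1) (inord 0) * A (inord 2%N) (inord 2%N).
Proof.
pose f (n m : nat) := A (inord n) (inord m).
have HA : forall i j : 'I_3, A i j = f i j by move=> i j; rewrite /f !inord_val.
rewrite (expand_det_row _ ord0) !big_ord_recl big_ord0 /cofactor.
rewrite !(expand_det_row _ ord0) !big_ord_recl !big_ord0 /cofactor.
rewrite !det_mx11 !mxE !HA /= /bump /= ?inordK // ?(addn0, add0n, addn1).
ring.
Qed.

Definition Xf (n : nat) : poly3 := 'X_(inord n).
Lemma XfE (i : 'I_3) : 'X_i = Xf i.
Proof. by rewrite /Xf inord_val. Qed.

Lemma inord_eq (n i : nat) : (n < 3)%N -> (i < 3)%N -> ((inord n : 'I_3) == inord i) = (n == i).
Proof. by move=> Hn Hi; rewrite -val_eqE /= !inordK. Qed.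

Lemma dX (n i : nat) : (n < 3)%N -> (i < 3)%N -> mderiv (inord i) (Xf n) = (n == i)%:R.
Proof.
move=> Hn Hi; rewrite /Xf mderivX mnm1E inord_eq //.
case: eqP => [->|_]; last by rewrite scale0r.

have -> : (U_(inord i) - U_(inord i) = 0 :> 'X_{1..3})%MM by apply/mnmP => k; rewrite !mnmE subnn.
by rewrite mpolyX0 scale1r.
Qed.

Lemma linformE (v : 'I_3 -> CC) :
  linform v = v (inord 0) *: Xf 0 + v (inord 1) *: Xf 1 + v (inord 2%N) *: Xf 2%N.
Proof.
rewrite /linform !big_ord_recl big_ord0 addr0 !XfE addrA.
have e0 : (ord0 : 'I_3) = inord 0 by apply: val_inj; rewrite /= inordK.
have e1 : (lift ord0 ord0 : 'I_3) = inord 1 by apply: val_inj; rewrite /= inordK.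
have e2 : (lift ord0 (lift ord0 ord0) : 'I_3) = inord 2%N by apply: val_inj; rewrite /= inordK.
by rewrite e2 e1 e0 !inordK.
Qed.

Lemma det3E (l m n : 'I_3 -> CC) : det3 l m n =
  l (inord 0) * m (inord 1) * n (inord 2%N) + l (inord 1) * m (inord 2%N) * n (inord 0)
  + l (inord 2%N) * m (inord 0) * n (inord 1) - l (inord 2%N) * m (inord 1) * n (inord 0)
  - l (inord 0) * m (inord 2%N) * n (inord 1) - l (inord 1) * m (inord 0) * n (inord 2%N).
Proof. by rewrite /det3 det33 !mxE !inordK. Qed.

Lemma is_cubicD p q : is_cubic p -> is_cubic q -> is_cubic (p + q).
Proof. exact: rpredD. Qed.
Lemma is_cubicZ (c : CC) p : is_cubic p -> is_cubic (c *: p).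
Proof. exact: rpredZ. Qed.
Lemma is_cubic0 : is_cubic 0.
Proof. exact: rpred0. Qed.
Lemma is_cubic_sum (I : Type) (r : seq I) (P : pred I) (F : I -> poly3) :
  (forall i, is_cubic (F i)) -> is_cubic (\sum_(i <- r | P i) F i).
Proof. by move=> H; apply: rpred_sum => i _; apply: H. Qed.
Lemma linform_cubic v : is_cubic (linform v ^+ 3).
Proof.
have H : linform v \is 1.-homog.
  by apply: rpred_sum => i _; apply: rpredZ; rewrite dhomogX; apply/eqP; exact: mdeg1.
exact: (dhomogMn 3 H).
Qed.

Arguments Xf : simpl never.


Definition monl : seq (nat * nat * nat) :=
  [:: (3,0,0); (0,3,0); (0,0,3); (2,1,0); (2,0,1); (1,2,0); (0,2,1); (1,0,2); (0,1,2); (1,1,1)]%N.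
Definition ex (k i : nat) : nat :=
  let: (a, b, c) := nth (0,0,0)%N monl k in
  if i == 0%N then a else if i == 1%N then b else c.
Definition mon (k : nat) : 'X_{1..3} := [multinom ex k i | i < 3].
Definition hp (a : nat -> CC) : poly3 := \sum_(k < 10) a k *: 'X_[mon k].

Lemma ord3E (m : 'X_{1..3}) (i : 'I_3) :
  m i = if val i == 0%N then m (inord 0) else if val i == 1%N then m (inord 1) else m (inord 2%N).
Proof.
case: i => -[|[|[|//]]] Hi /=; congr (m _); apply: val_inj; by rewrite /= inordK.
Qed.

Lemma mdeg3 (m : 'X_{1..3}) : mdeg m = (m (inord 0) + m (inord 1) + m (inord 2%N))%N.
Proof.
rewrite mdegE !big_ord_recl big_ord0 addn0 addnA.
by rewrite [m ord0]ord3E [m (lift _ _)]ord3E [m (lift _ (lift _ _))]ord3E.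
Qed.

Lemma mon_val (k : nat) (i : nat) : (i < 3)%N -> mon k (inord i) = ex k i.
Proof. by move=> Hi; rewrite mnmE inordK. Qed.

Lemma mdeg_mon (k : nat) : (k < 10)%N -> mdeg (mon k) = 3%N.
Proof.
move=> Hk; rewrite mdeg3 !mon_val //.
by case: k Hk => [|[|[|[|[|[|[|[|[|[|k]]]]]]]]]].
Qed.

Lemma monl3 (a b c : nat) : (a + b + c = 3)%N -> (a, b, c) \in monl.
Proof.
move: a b c => [|[|[|[|a]]]] [|[|[|[|b]]]] [|[|[|[|c]]]] //=; lia.
Qed.

Lemma mon_surj (m : 'X_{1..3}) : mdeg m = 3%N -> exists2 j, (j < 10)%N & m = mon j.
Proof.
rewrite mdeg3 => /monl3 Hin.
exists (index (m (inord 0), m (inord 1), m (inord 2%N)) monl); first by rewrite -[10%N]/(size monl) index_mem.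
apply/mnmP => i; rewrite mnmE /ex nth_index // ord3E.
by case: i => -[|[|[|//]]].
Qed.

Lemma mon_inj (k j : nat) : (k < 10)%N -> (j < 10)%N -> (mon k == mon j) = (k == j).
Proof.
move=> Hk Hj; apply/eqP/eqP => [E|->] //.
have E0 := congr1 (fun m : 'X_{1..3} => m (inord 0)) E.
have E1 := congr1 (fun m : 'X_{1..3} => m (inord 1)) E.
have E2 := congr1 (fun m : 'X_{1..3} => m (inord 2%N)) E.
move: E0 E1 E2; clear E; rewrite /= !mon_val //.
move: k j Hk Hj => [|[|[|[|[|[|[|[|[|[|k]]]]]]]]]] [|[|[|[|[|[|[|[|[|[|j]]]]]]]]]] //=.
Qed.

Lemma hp_cubic a : is_cubic (hp a).
Proof.
apply: rpred_sum => k _; apply: rpredZ; rewrite dhomogX; apply/eqP; exact: mdeg_mon.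
Qed.

Lemma cubic_decomp (p : poly3) : is_cubic p -> p = hp (fun k => p@_(mon k)).
Proof.
move=> Hp; apply/mpolyP => m; rewrite /hp raddf_sum /=.
under eq_bigr do rewrite mcoeffZ mcoeffX.
have [Hm|Hm] := eqVneq (mdeg m) 3%N.
  have [j Hj ->] := mon_surj m Hm.
  rewrite (bigD1 (Ordinal Hj)) //= eqxx mulr1 big1 ?addr0 // => k /negbTE Hk.
  rewrite mon_inj //.
  suff -> : (k == j :> nat) = false by rewrite mulr0.
  by rewrite -Hk -val_eqE.
rewrite (dhomog_nemf_coeff Hp Hm) big1 // => k _.
suff -> : (mon k == m) = false by rewrite mulr0.
by apply/negbTE; apply: contra Hm => /eqP <-; rewrite mdeg_mon.
Qed.


Arguments Xf : simpl never.

Lemma sum10 (V : zmodType) (F : nat -> V) :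
  \sum_(t < 10) F t = F 0%N + F 1%N + F 2%N + F 3%N + F 4%N + F 5%N + F 6%N + F 7%N + F 8%N + F 9%N.
Proof. rewrite !big_ord_recl big_ord0 addr0 !addrA. reflexivity. Qed.

Lemma sumI (V : zmodType) (G : 'I_10 -> V) :
  \sum_(t < 10) G t = G (inord 0%N) + G (inord 1%N) + G (inord 2%N) + G (inord 3%N) + G (inord 4%N)
    + G (inord 5%N) + G (inord 6%N) + G (inord 7%N) + G (inord 8%N) + G (inord 9%N).
Proof.
rewrite (eq_bigr (fun t : 'I_10 => G (inord t))) => [|t _]; last by rewrite inord_val.
exact: (sum10 _ (fun n => G (inord n))).
Qed.

Lemma Xmon k : 'X_[mon k] = Xf 0%N ^+ ex k 0 * Xf 1%N ^+ ex k 1 * Xf 2%N ^+ ex k 2 :> poly3.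
Proof.
rewrite mpolyXE_id !big_ord_recl big_ord0 mulr1 !mnmE !XfE mulrA. reflexivity.
Qed.

Lemma Xmon_0 : 'X_[mon 0%N] = Xf 0%N ^+ 3 * Xf 1%N ^+ 0 * Xf 2%N ^+ 0 :> poly3.
Proof. exact: Xmon. Qed.

Lemma Xmon_1 : 'X_[mon 1%N] = Xf 0%N ^+ 0 * Xf 1%N ^+ 3 * Xf 2%N ^+ 0 :> poly3.
Proof. exact: Xmon. Qed.

Lemma Xmon_2 : 'X_[mon 2%N] = Xf 0%N ^+ 0 * Xf 1%N ^+ 0 * Xf 2%N ^+ 3 :> poly3.
Proof. exact: Xmon. Qed.

Lemma Xmon_3 : 'X_[mon 3%N] = Xf 0%N ^+ 2 * Xf 1%N ^+ 1 * Xf 2%N ^+ 0 :> poly3.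
Proof. exact: Xmon. Qed.

Lemma Xmon_4 : 'X_[mon 4%N] = Xf 0%N ^+ 2 * Xf 1%N ^+ 0 * Xf 2%N ^+ 1 :> poly3.
Proof. exact: Xmon. Qed.

Lemma Xmon_5 : 'X_[mon 5%N] = Xf 0%N ^+ 1 * Xf 1%N ^+ 2 * Xf 2%N ^+ 0 :> poly3.
Proof. exact: Xmon. Qed.

Lemma Xmon_6 : 'X_[mon 6%N] = Xf 0%N ^+ 0 * Xf 1%N ^+ 2 * Xf 2%N ^+ 1 :> poly3.
Proof. exact: Xmon. Qed.

Lemma Xmon_7 : 'X_[mon 7%N] = Xf 0%N ^+ 1 * Xf 1%N ^+ 0 * Xf 2%N ^+ 2 :> poly3.
Proof. exact: Xmon. Qed.

Lemma Xmon_8 : 'X_[mon 8%N] = Xf 0%N ^+ 0 * Xf 1%N ^+ 1 * Xf 2%N ^+ 2 :> poly3.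
Proof. exact: Xmon. Qed.

Lemma Xmon_9 : 'X_[mon 9%N] = Xf 0%N ^+ 1 * Xf 1%N ^+ 1 * Xf 2%N ^+ 1 :> poly3.
Proof. exact: Xmon. Qed.

Lemma hpE (a : nat -> CC) : hp a = (a 0%N)%:MP * (Xf 0%N * Xf 0%N * Xf 0%N) + (a 1%N)%:MP * (Xf 1%N * Xf 1%N * Xf 1%N) + (a 2%N)%:MP * (Xf 2%N * Xf 2%N * Xf 2%N) + (a 3%N)%:MP * (Xf 0%N * Xf 0%N * Xf 1%N) + (a 4%N)%:MP * (Xf 0%N * Xf 0%N * Xf 2%N) + (a 5%N)%:MP * (Xf 0%N * Xf 1%N * Xf 1%N) + (a 6%N)%:MP * (Xf 1%N * Xf 1%N * Xf 2%N) + (a 7%N)%:MP * (Xf 0%N * Xf 2%N * Xf 2%N) + (a 8%N)%:MP * (Xf 1%N * Xf 2%N * Xf 2%N) + (a 9%N)%:MP * (Xf 0%N * Xf 1%N * Xf 2%N).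
Proof.
rewrite /hp sumI !inordK // Xmon_0 Xmon_1 Xmon_2 Xmon_3 Xmon_4 Xmon_5 Xmon_6 Xmon_7 Xmon_8 Xmon_9.
rewrite -!mul_mpolyC; ring.
Qed.

Lemma dX00 : mderiv (inord 0%N) (Xf 0%N) = 1.
Proof. by rewrite dX. Qed.

Lemma dX01 : mderiv (inord 1%N) (Xf 0%N) = 0.
Proof. by rewrite dX. Qed.

Lemma dX02 : mderiv (inord 2%N) (Xf 0%N) = 0.
Proof. by rewrite dX. Qed.

Lemma dX10 : mderiv (inord 0%N) (Xf 1%N) = 0.
Proof. by rewrite dX. Qed.

Lemma dX11 : mderiv (inord 1%N) (Xf 1%N) = 1.
Proof. by rewrite dX. Qed.

Lemma dX12 : mderiv (inord 2%N) (Xf 1%N) = 0.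
Proof. by rewrite dX. Qed.

Lemma dX20 : mderiv (inord 0%N) (Xf 2%N) = 0.
Proof. by rewrite dX. Qed.

Lemma dX21 : mderiv (inord 1%N) (Xf 2%N) = 0.
Proof. by rewrite dX. Qed.

Lemma dX22 : mderiv (inord 2%N) (Xf 2%N) = 1.
Proof. by rewrite dX. Qed.

Lemma d2X (k i j : nat) : (i < 3)%N -> (j < 3)%N ->
  mderiv (inord i) (mderiv (inord j) 'X_[mon k]) =
  ((ex k j) * (ex k i - (j == i)))%:R *:
   (Xf 0%N ^+ (ex k 0 - (j == 0%N) - (i == 0%N)) * Xf 1%N ^+ (ex k 1 - (j == 1%N) - (i == 1%N))
    * Xf 2%N ^+ (ex k 2 - (j == 2%N) - (i == 2%N))) :> poly3.
Proof.
move=> Hi Hj.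
rewrite mderivX mderivZ mderivX scalerA -natrM.
rewrite !mnmBE !mnm1E /mon !mnmE.
rewrite (inord_eq j i) // !inordK //.
congr (_ *: _).
rewrite mpolyXE_id !big_ord_recl big_ord0 mulr1 mulrA !XfE.
have e0 : (ord0 : 'I_3) = inord 0%N by apply: val_inj; rewrite /= inordK.
have e1 : (lift ord0 ord0 : 'I_3) = inord 1%N by apply: val_inj; rewrite /= inordK.
have e2 : (lift ord0 (lift ord0 ord0) : 'I_3) = inord 2%N by apply: val_inj; rewrite /= inordK.
rewrite e2 e1 e0 !mnmBE !mnm1E !mnmE !inordK //.
by rewrite (inord_eq j 0) // (inord_eq j 1) // (inord_eq j 2) // (inord_eq i 0) // (inord_eq i 1) // (inord_eq i 2).
Qed.

Lemma dd_add (i j : 'I_3) (p q : poly3) :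
  mderiv i (mderiv j (p + q)) = mderiv i (mderiv j p) + mderiv i (mderiv j q).
Proof. by rewrite !mderivD. Qed.

Lemma dd_scale (i j : 'I_3) (c : CC) (m : 'X_{1..3}) :
  mderiv i (mderiv j (c *: 'X_[m])) = c *: mderiv i (mderiv j 'X_[m]).
Proof. by rewrite !mderivZ. Qed.

Lemma dd_hp (a : nat -> CC) (i j : 'I_3) :
  mderiv i (mderiv j (hp a)) = \sum_(k < 10) a k *: mderiv i (mderiv j 'X_[mon k]).
Proof.
rewrite /hp; apply: (big_rec2 (fun p q => mderiv i (mderiv j p) = q)).
  by rewrite !mderiv0.
by move=> k y1 y2 _ <-; rewrite !mderivD !mderivZ.
Qed.

Lemma DD_0_0_0 : mderiv (inord 0%N) (mderiv (inord 0%N) 'X_[mon 0%N]) = 6%:R *: (Xf 0%N ^+ 1 * Xf 1%N ^+ 0 * Xf 2%N ^+ 0) :> poly3.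
Proof. by rewrite d2X. Qed.

Lemma DD_0_0_1 : mderiv (inord 0%N) (mderiv (inord 1%N) 'X_[mon 0%N]) = 0%:R *: (Xf 0%N ^+ 2 * Xf 1%N ^+ 0 * Xf 2%N ^+ 0) :> poly3.
Proof. by rewrite d2X. Qed.

Lemma DD_0_0_2 : mderiv (inord 0%N) (mderiv (inord 2%N) 'X_[mon 0%N]) = 0%:R *: (Xf 0%N ^+ 2 * Xf 1%N ^+ 0 * Xf 2%N ^+ 0) :> poly3.
Proof. by rewrite d2X. Qed.

Lemma DD_0_1_0 : mderiv (inord 1%N) (mderiv (inord 0%N) 'X_[mon 0%N]) = 0%:R *: (Xf 0%N ^+ 2 * Xf 1%N ^+ 0 * Xf 2%N ^+ 0) :> poly3.
Proof. by rewrite d2X. Qed.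

Lemma DD_0_1_1 : mderiv (inord 1%N) (mderiv (inord 1%N) 'X_[mon 0%N]) = 0%:R *: (Xf 0%N ^+ 3 * Xf 1%N ^+ 0 * Xf 2%N ^+ 0) :> poly3.
Proof. by rewrite d2X. Qed.

Lemma DD_0_1_2 : mderiv (inord 1%N) (mderiv (inord 2%N) 'X_[mon 0%N]) = 0%:R *: (Xf 0%N ^+ 3 * Xf 1%N ^+ 0 * Xf 2%N ^+ 0) :> poly3.
Proof. by rewrite d2X. Qed.

Lemma DD_0_2_0 : mderiv (inord 2%N) (mderiv (inord 0%N) 'X_[mon 0%N]) = 0%:R *: (Xf 0%N ^+ 2 * Xf 1%N ^+ 0 * Xf 2%N ^+ 0) :> poly3.
Proof. by rewrite d2X. Qed.

Lemma DD_0_2_1 : mderiv (inord 2%N) (mderiv (inord 1%N) 'X_[mon 0%N]) = 0%:R *: (Xf 0%N ^+ 3 * Xf 1%N ^+ 0 * Xf 2%N ^+ 0) :> poly3.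
Proof. by rewrite d2X. Qed.

Lemma DD_0_2_2 : mderiv (inord 2%N) (mderiv (inord 2%N) 'X_[mon 0%N]) = 0%:R *: (Xf 0%N ^+ 3 * Xf 1%N ^+ 0 * Xf 2%N ^+ 0) :> poly3.
Proof. by rewrite d2X. Qed.

Lemma DD_1_0_0 : mderiv (inord 0%N) (mderiv (inord 0%N) 'X_[mon 1%N]) = 0%:R *: (Xf 0%N ^+ 0 * Xf 1%N ^+ 3 * Xf 2%N ^+ 0) :> poly3.
Proof. by rewrite d2X. Qed.

Lemma DD_1_0_1 : mderiv (inord 0%N) (mderiv (inord 1%N) 'X_[mon 1%N]) = 0%:R *: (Xf 0%N ^+ 0 * Xf 1%N ^+ 2 * Xf 2%N ^+ 0) :> poly3.
Proof. by rewrite d2X. Qed.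

Lemma DD_1_0_2 : mderiv (inord 0%N) (mderiv (inord 2%N) 'X_[mon 1%N]) = 0%:R *: (Xf 0%N ^+ 0 * Xf 1%N ^+ 3 * Xf 2%N ^+ 0) :> poly3.
Proof. by rewrite d2X. Qed.

Lemma DD_1_1_0 : mderiv (inord 1%N) (mderiv (inord 0%N) 'X_[mon 1%N]) = 0%:R *: (Xf 0%N ^+ 0 * Xf 1%N ^+ 2 * Xf 2%N ^+ 0) :> poly3.
Proof. by rewrite d2X. Qed.

Lemma DD_1_1_1 : mderiv (inord 1%N) (mderiv (inord 1%N) 'X_[mon 1%N]) = 6%:R *: (Xf 0%N ^+ 0 * Xf 1%N ^+ 1 * Xf 2%N ^+ 0) :> poly3.
Proof. by rewrite d2X. Qed.

Lemma DD_1_1_2 : mderiv (inord 1%N) (mderiv (inord 2%N) 'X_[mon 1%N]) = 0%:R *: (Xf 0%N ^+ 0 * Xf 1%N ^+ 2 * Xf 2%N ^+ 0) :> poly3.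
Proof. by rewrite d2X. Qed.

Lemma DD_1_2_0 : mderiv (inord 2%N) (mderiv (inord 0%N) 'X_[mon 1%N]) = 0%:R *: (Xf 0%N ^+ 0 * Xf 1%N ^+ 3 * Xf 2%N ^+ 0) :> poly3.
Proof. by rewrite d2X. Qed.

Lemma DD_1_2_1 : mderiv (inord 2%N) (mderiv (inord 1%N) 'X_[mon 1%N]) = 0%:R *: (Xf 0%N ^+ 0 * Xf 1%N ^+ 2 * Xf 2%N ^+ 0) :> poly3.
Proof. by rewrite d2X. Qed.

Lemma DD_1_2_2 : mderiv (inord 2%N) (mderiv (inord 2%N) 'X_[mon 1%N]) = 0%:R *: (Xf 0%N ^+ 0 * Xf 1%N ^+ 3 * Xf 2%N ^+ 0) :> poly3.
Proof. by rewrite d2X. Qed.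

Lemma DD_2_0_0 : mderiv (inord 0%N) (mderiv (inord 0%N) 'X_[mon 2%N]) = 0%:R *: (Xf 0%N ^+ 0 * Xf 1%N ^+ 0 * Xf 2%N ^+ 3) :> poly3.
Proof. by rewrite d2X. Qed.

Lemma DD_2_0_1 : mderiv (inord 0%N) (mderiv (inord 1%N) 'X_[mon 2%N]) = 0%:R *: (Xf 0%N ^+ 0 * Xf 1%N ^+ 0 * Xf 2%N ^+ 3) :> poly3.
Proof. by rewrite d2X. Qed.

Lemma DD_2_0_2 : mderiv (inord 0%N) (mderiv (inord 2%N) 'X_[mon 2%N]) = 0%:R *: (Xf 0%N ^+ 0 * Xf 1%N ^+ 0 * Xf 2%N ^+ 2) :> poly3.
Proof. by rewrite d2X. Qed.

Lemma DD_2_1_0 : mderiv (inord 1%N) (mderiv (inord 0%N) 'X_[mon 2%N]) = 0%:R *: (Xf 0%N ^+ 0 * Xf 1%N ^+ 0 * Xf 2%N ^+ 3) :> poly3.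
Proof. by rewrite d2X. Qed.

Lemma DD_2_1_1 : mderiv (inord 1%N) (mderiv (inord 1%N) 'X_[mon 2%N]) = 0%:R *: (Xf 0%N ^+ 0 * Xf 1%N ^+ 0 * Xf 2%N ^+ 3) :> poly3.
Proof. by rewrite d2X. Qed.

Lemma DD_2_1_2 : mderiv (inord 1%N) (mderiv (inord 2%N) 'X_[mon 2%N]) = 0%:R *: (Xf 0%N ^+ 0 * Xf 1%N ^+ 0 * Xf 2%N ^+ 2) :> poly3.
Proof. by rewrite d2X. Qed.

Lemma DD_2_2_0 : mderiv (inord 2%N) (mderiv (inord 0%N) 'X_[mon 2%N]) = 0%:R *: (Xf 0%N ^+ 0 * Xf 1%N ^+ 0 * Xf 2%N ^+ 2) :> poly3.
Proof. by rewrite d2X. Qed.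

Lemma DD_2_2_1 : mderiv (inord 2%N) (mderiv (inord 1%N) 'X_[mon 2%N]) = 0%:R *: (Xf 0%N ^+ 0 * Xf 1%N ^+ 0 * Xf 2%N ^+ 2) :> poly3.
Proof. by rewrite d2X. Qed.

Lemma DD_2_2_2 : mderiv (inord 2%N) (mderiv (inord 2%N) 'X_[mon 2%N]) = 6%:R *: (Xf 0%N ^+ 0 * Xf 1%N ^+ 0 * Xf 2%N ^+ 1) :> poly3.
Proof. by rewrite d2X. Qed.

Lemma DD_3_0_0 : mderiv (inord 0%N) (mderiv (inord 0%N) 'X_[mon 3%N]) = 2%:R *: (Xf 0%N ^+ 0 * Xf 1%N ^+ 1 * Xf 2%N ^+ 0) :> poly3.
Proof. by rewrite d2X. Qed.

Lemma DD_3_0_1 : mderiv (inord 0%N) (mderiv (inord 1%N) 'X_[mon 3%N]) = 2%:R *: (Xf 0%N ^+ 1 * Xf 1%N ^+ 0 * Xf 2%N ^+ 0) :> poly3.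
Proof. by rewrite d2X. Qed.

Lemma DD_3_0_2 : mderiv (inord 0%N) (mderiv (inord 2%N) 'X_[mon 3%N]) = 0%:R *: (Xf 0%N ^+ 1 * Xf 1%N ^+ 1 * Xf 2%N ^+ 0) :> poly3.
Proof. by rewrite d2X. Qed.

Lemma DD_3_1_0 : mderiv (inord 1%N) (mderiv (inord 0%N) 'X_[mon 3%N]) = 2%:R *: (Xf 0%N ^+ 1 * Xf 1%N ^+ 0 * Xf 2%N ^+ 0) :> poly3.
Proof. by rewrite d2X. Qed.

Lemma DD_3_1_1 : mderiv (inord 1%N) (mderiv (inord 1%N) 'X_[mon 3%N]) = 0%:R *: (Xf 0%N ^+ 2 * Xf 1%N ^+ 0 * Xf 2%N ^+ 0) :> poly3.
Proof. by rewrite d2X. Qed.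

Lemma DD_3_1_2 : mderiv (inord 1%N) (mderiv (inord 2%N) 'X_[mon 3%N]) = 0%:R *: (Xf 0%N ^+ 2 * Xf 1%N ^+ 0 * Xf 2%N ^+ 0) :> poly3.
Proof. by rewrite d2X. Qed.

Lemma DD_3_2_0 : mderiv (inord 2%N) (mderiv (inord 0%N) 'X_[mon 3%N]) = 0%:R *: (Xf 0%N ^+ 1 * Xf 1%N ^+ 1 * Xf 2%N ^+ 0) :> poly3.
Proof. by rewrite d2X. Qed.

Lemma DD_3_2_1 : mderiv (inord 2%N) (mderiv (inord 1%N) 'X_[mon 3%N]) = 0%:R *: (Xf 0%N ^+ 2 * Xf 1%N ^+ 0 * Xf 2%N ^+ 0) :> poly3.
Proof. by rewrite d2X. Qed.

Lemma DD_3_2_2 : mderiv (inord 2%N) (mderiv (inord 2%N) 'X_[mon 3%N]) = 0%:R *: (Xf 0%N ^+ 2 * Xf 1%N ^+ 1 * Xf 2%N ^+ 0) :> poly3.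
Proof. by rewrite d2X. Qed.

Lemma DD_4_0_0 : mderiv (inord 0%N) (mderiv (inord 0%N) 'X_[mon 4%N]) = 2%:R *: (Xf 0%N ^+ 0 * Xf 1%N ^+ 0 * Xf 2%N ^+ 1) :> poly3.
Proof. by rewrite d2X. Qed.

Lemma DD_4_0_1 : mderiv (inord 0%N) (mderiv (inord 1%N) 'X_[mon 4%N]) = 0%:R *: (Xf 0%N ^+ 1 * Xf 1%N ^+ 0 * Xf 2%N ^+ 1) :> poly3.
Proof. by rewrite d2X. Qed.

Lemma DD_4_0_2 : mderiv (inord 0%N) (mderiv (inord 2%N) 'X_[mon 4%N]) = 2%:R *: (Xf 0%N ^+ 1 * Xf 1%N ^+ 0 * Xf 2%N ^+ 0) :> poly3.
Proof. by rewrite d2X. Qed.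

Lemma DD_4_1_0 : mderiv (inord 1%N) (mderiv (inord 0%N) 'X_[mon 4%N]) = 0%:R *: (Xf 0%N ^+ 1 * Xf 1%N ^+ 0 * Xf 2%N ^+ 1) :> poly3.
Proof. by rewrite d2X. Qed.

Lemma DD_4_1_1 : mderiv (inord 1%N) (mderiv (inord 1%N) 'X_[mon 4%N]) = 0%:R *: (Xf 0%N ^+ 2 * Xf 1%N ^+ 0 * Xf 2%N ^+ 1) :> poly3.
Proof. by rewrite d2X. Qed.

Lemma DD_4_1_2 : mderiv (inord 1%N) (mderiv (inord 2%N) 'X_[mon 4%N]) = 0%:R *: (Xf 0%N ^+ 2 * Xf 1%N ^+ 0 * Xf 2%N ^+ 0) :> poly3.
Proof. by rewrite d2X. Qed.

Lemma DD_4_2_0 : mderiv (inord 2%N) (mderiv (inord 0%N) 'X_[mon 4%N]) = 2%:R *: (Xf 0%N ^+ 1 * Xf 1%N ^+ 0 * Xf 2%N ^+ 0) :> poly3.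
Proof. by rewrite d2X. Qed.

Lemma DD_4_2_1 : mderiv (inord 2%N) (mderiv (inord 1%N) 'X_[mon 4%N]) = 0%:R *: (Xf 0%N ^+ 2 * Xf 1%N ^+ 0 * Xf 2%N ^+ 0) :> poly3.
Proof. by rewrite d2X. Qed.

Lemma DD_4_2_2 : mderiv (inord 2%N) (mderiv (inord 2%N) 'X_[mon 4%N]) = 0%:R *: (Xf 0%N ^+ 2 * Xf 1%N ^+ 0 * Xf 2%N ^+ 0) :> poly3.
Proof. by rewrite d2X. Qed.

Lemma DD_5_0_0 : mderiv (inord 0%N) (mderiv (inord 0%N) 'X_[mon 5%N]) = 0%:R *: (Xf 0%N ^+ 0 * Xf 1%N ^+ 2 * Xf 2%N ^+ 0) :> poly3.
Proof. by rewrite d2X. Qed.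

Lemma DD_5_0_1 : mderiv (inord 0%N) (mderiv (inord 1%N) 'X_[mon 5%N]) = 2%:R *: (Xf 0%N ^+ 0 * Xf 1%N ^+ 1 * Xf 2%N ^+ 0) :> poly3.
Proof. by rewrite d2X. Qed.

Lemma DD_5_0_2 : mderiv (inord 0%N) (mderiv (inord 2%N) 'X_[mon 5%N]) = 0%:R *: (Xf 0%N ^+ 0 * Xf 1%N ^+ 2 * Xf 2%N ^+ 0) :> poly3.
Proof. by rewrite d2X. Qed.

Lemma DD_5_1_0 : mderiv (inord 1%N) (mderiv (inord 0%N) 'X_[mon 5%N]) = 2%:R *: (Xf 0%N ^+ 0 * Xf 1%N ^+ 1 * Xf 2%N ^+ 0) :> poly3.
Proof. by rewrite d2X. Qed.

Lemma DD_5_1_1 : mderiv (inord 1%N) (mderiv (inord 1%N) 'X_[mon 5%N]) = 2%:R *: (Xf 0%N ^+ 1 * Xf 1%N ^+ 0 * Xf 2%N ^+ 0) :> poly3.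
Proof. by rewrite d2X. Qed.

Lemma DD_5_1_2 : mderiv (inord 1%N) (mderiv (inord 2%N) 'X_[mon 5%N]) = 0%:R *: (Xf 0%N ^+ 1 * Xf 1%N ^+ 1 * Xf 2%N ^+ 0) :> poly3.
Proof. by rewrite d2X. Qed.

Lemma DD_5_2_0 : mderiv (inord 2%N) (mderiv (inord 0%N) 'X_[mon 5%N]) = 0%:R *: (Xf 0%N ^+ 0 * Xf 1%N ^+ 2 * Xf 2%N ^+ 0) :> poly3.
Proof. by rewrite d2X. Qed.

Lemma DD_5_2_1 : mderiv (inord 2%N) (mderiv (inord 1%N) 'X_[mon 5%N]) = 0%:R *: (Xf 0%N ^+ 1 * Xf 1%N ^+ 1 * Xf 2%N ^+ 0) :> poly3.
Proof. by rewrite d2X. Qed.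

Lemma DD_5_2_2 : mderiv (inord 2%N) (mderiv (inord 2%N) 'X_[mon 5%N]) = 0%:R *: (Xf 0%N ^+ 1 * Xf 1%N ^+ 2 * Xf 2%N ^+ 0) :> poly3.
Proof. by rewrite d2X. Qed.

Lemma DD_6_0_0 : mderiv (inord 0%N) (mderiv (inord 0%N) 'X_[mon 6%N]) = 0%:R *: (Xf 0%N ^+ 0 * Xf 1%N ^+ 2 * Xf 2%N ^+ 1) :> poly3.
Proof. by rewrite d2X. Qed.

Lemma DD_6_0_1 : mderiv (inord 0%N) (mderiv (inord 1%N) 'X_[mon 6%N]) = 0%:R *: (Xf 0%N ^+ 0 * Xf 1%N ^+ 1 * Xf 2%N ^+ 1) :> poly3.
Proof. by rewrite d2X. Qed.

Lemma DD_6_0_2 : mderiv (inord 0%N) (mderiv (inord 2%N) 'X_[mon 6%N]) = 0%:R *: (Xf 0%N ^+ 0 * Xf 1%N ^+ 2 * Xf 2%N ^+ 0) :> poly3.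
Proof. by rewrite d2X. Qed.

Lemma DD_6_1_0 : mderiv (inord 1%N) (mderiv (inord 0%N) 'X_[mon 6%N]) = 0%:R *: (Xf 0%N ^+ 0 * Xf 1%N ^+ 1 * Xf 2%N ^+ 1) :> poly3.
Proof. by rewrite d2X. Qed.

Lemma DD_6_1_1 : mderiv (inord 1%N) (mderiv (inord 1%N) 'X_[mon 6%N]) = 2%:R *: (Xf 0%N ^+ 0 * Xf 1%N ^+ 0 * Xf 2%N ^+ 1) :> poly3.
Proof. by rewrite d2X. Qed.

Lemma DD_6_1_2 : mderiv (inord 1%N) (mderiv (inord 2%N) 'X_[mon 6%N]) = 2%:R *: (Xf 0%N ^+ 0 * Xf 1%N ^+ 1 * Xf 2%N ^+ 0) :> poly3.
Proof. by rewrite d2X. Qed.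

Lemma DD_6_2_0 : mderiv (inord 2%N) (mderiv (inord 0%N) 'X_[mon 6%N]) = 0%:R *: (Xf 0%N ^+ 0 * Xf 1%N ^+ 2 * Xf 2%N ^+ 0) :> poly3.
Proof. by rewrite d2X. Qed.

Lemma DD_6_2_1 : mderiv (inord 2%N) (mderiv (inord 1%N) 'X_[mon 6%N]) = 2%:R *: (Xf 0%N ^+ 0 * Xf 1%N ^+ 1 * Xf 2%N ^+ 0) :> poly3.
Proof. by rewrite d2X. Qed.

Lemma DD_6_2_2 : mderiv (inord 2%N) (mderiv (inord 2%N) 'X_[mon 6%N]) = 0%:R *: (Xf 0%N ^+ 0 * Xf 1%N ^+ 2 * Xf 2%N ^+ 0) :> poly3.
Proof. by rewrite d2X. Qed.

Lemma DD_7_0_0 : mderiv (inord 0%N) (mderiv (inord 0%N) 'X_[mon 7%N]) = 0%:R *: (Xf 0%N ^+ 0 * Xf 1%N ^+ 0 * Xf 2%N ^+ 2) :> poly3.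
Proof. by rewrite d2X. Qed.

Lemma DD_7_0_1 : mderiv (inord 0%N) (mderiv (inord 1%N) 'X_[mon 7%N]) = 0%:R *: (Xf 0%N ^+ 0 * Xf 1%N ^+ 0 * Xf 2%N ^+ 2) :> poly3.
Proof. by rewrite d2X. Qed.

Lemma DD_7_0_2 : mderiv (inord 0%N) (mderiv (inord 2%N) 'X_[mon 7%N]) = 2%:R *: (Xf 0%N ^+ 0 * Xf 1%N ^+ 0 * Xf 2%N ^+ 1) :> poly3.
Proof. by rewrite d2X. Qed.

Lemma DD_7_1_0 : mderiv (inord 1%N) (mderiv (inord 0%N) 'X_[mon 7%N]) = 0%:R *: (Xf 0%N ^+ 0 * Xf 1%N ^+ 0 * Xf 2%N ^+ 2) :> poly3.
Proof. by rewrite d2X. Qed.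

Lemma DD_7_1_1 : mderiv (inord 1%N) (mderiv (inord 1%N) 'X_[mon 7%N]) = 0%:R *: (Xf 0%N ^+ 1 * Xf 1%N ^+ 0 * Xf 2%N ^+ 2) :> poly3.
Proof. by rewrite d2X. Qed.

Lemma DD_7_1_2 : mderiv (inord 1%N) (mderiv (inord 2%N) 'X_[mon 7%N]) = 0%:R *: (Xf 0%N ^+ 1 * Xf 1%N ^+ 0 * Xf 2%N ^+ 1) :> poly3.
Proof. by rewrite d2X. Qed.

Lemma DD_7_2_0 : mderiv (inord 2%N) (mderiv (inord 0%N) 'X_[mon 7%N]) = 2%:R *: (Xf 0%N ^+ 0 * Xf 1%N ^+ 0 * Xf 2%N ^+ 1) :> poly3.
Proof. by rewrite d2X. Qed.

Lemma DD_7_2_1 : mderiv (inord 2%N) (mderiv (inord 1%N) 'X_[mon 7%N]) = 0%:R *: (Xf 0%N ^+ 1 * Xf 1%N ^+ 0 * Xf 2%N ^+ 1) :> poly3.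
Proof. by rewrite d2X. Qed.

Lemma DD_7_2_2 : mderiv (inord 2%N) (mderiv (inord 2%N) 'X_[mon 7%N]) = 2%:R *: (Xf 0%N ^+ 1 * Xf 1%N ^+ 0 * Xf 2%N ^+ 0) :> poly3.
Proof. by rewrite d2X. Qed.

Lemma DD_8_0_0 : mderiv (inord 0%N) (mderiv (inord 0%N) 'X_[mon 8%N]) = 0%:R *: (Xf 0%N ^+ 0 * Xf 1%N ^+ 1 * Xf 2%N ^+ 2) :> poly3.
Proof. by rewrite d2X. Qed.

Lemma DD_8_0_1 : mderiv (inord 0%N) (mderiv (inord 1%N) 'X_[mon 8%N]) = 0%:R *: (Xf 0%N ^+ 0 * Xf 1%N ^+ 0 * Xf 2%N ^+ 2) :> poly3.
Proof. by rewrite d2X. Qed.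

Lemma DD_8_0_2 : mderiv (inord 0%N) (mderiv (inord 2%N) 'X_[mon 8%N]) = 0%:R *: (Xf 0%N ^+ 0 * Xf 1%N ^+ 1 * Xf 2%N ^+ 1) :> poly3.
Proof. by rewrite d2X. Qed.

Lemma DD_8_1_0 : mderiv (inord 1%N) (mderiv (inord 0%N) 'X_[mon 8%N]) = 0%:R *: (Xf 0%N ^+ 0 * Xf 1%N ^+ 0 * Xf 2%N ^+ 2) :> poly3.
Proof. by rewrite d2X. Qed.

Lemma DD_8_1_1 : mderiv (inord 1%N) (mderiv (inord 1%N) 'X_[mon 8%N]) = 0%:R *: (Xf 0%N ^+ 0 * Xf 1%N ^+ 0 * Xf 2%N ^+ 2) :> poly3.
Proof. by rewrite d2X. Qed.

Lemma DD_8_1_2 : mderiv (inord 1%N) (mderiv (inord 2%N) 'X_[mon 8%N]) = 2%:R *: (Xf 0%N ^+ 0 * Xf 1%N ^+ 0 * Xf 2%N ^+ 1) :> poly3.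
Proof. by rewrite d2X. Qed.

Lemma DD_8_2_0 : mderiv (inord 2%N) (mderiv (inord 0%N) 'X_[mon 8%N]) = 0%:R *: (Xf 0%N ^+ 0 * Xf 1%N ^+ 1 * Xf 2%N ^+ 1) :> poly3.
Proof. by rewrite d2X. Qed.

Lemma DD_8_2_1 : mderiv (inord 2%N) (mderiv (inord 1%N) 'X_[mon 8%N]) = 2%:R *: (Xf 0%N ^+ 0 * Xf 1%N ^+ 0 * Xf 2%N ^+ 1) :> poly3.
Proof. by rewrite d2X. Qed.

Lemma DD_8_2_2 : mderiv (inord 2%N) (mderiv (inord 2%N) 'X_[mon 8%N]) = 2%:R *: (Xf 0%N ^+ 0 * Xf 1%N ^+ 1 * Xf 2%N ^+ 0) :> poly3.
Proof. by rewrite d2X. Qed.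

Lemma DD_9_0_0 : mderiv (inord 0%N) (mderiv (inord 0%N) 'X_[mon 9%N]) = 0%:R *: (Xf 0%N ^+ 0 * Xf 1%N ^+ 1 * Xf 2%N ^+ 1) :> poly3.
Proof. by rewrite d2X. Qed.

Lemma DD_9_0_1 : mderiv (inord 0%N) (mderiv (inord 1%N) 'X_[mon 9%N]) = 1%:R *: (Xf 0%N ^+ 0 * Xf 1%N ^+ 0 * Xf 2%N ^+ 1) :> poly3.
Proof. by rewrite d2X. Qed.

Lemma DD_9_0_2 : mderiv (inord 0%N) (mderiv (inord 2%N) 'X_[mon 9%N]) = 1%:R *: (Xf 0%N ^+ 0 * Xf 1%N ^+ 1 * Xf 2%N ^+ 0) :> poly3.
Proof. by rewrite d2X. Qed.

Lemma DD_9_1_0 : mderiv (inord 1%N) (mderiv (inord 0%N) 'X_[mon 9%N]) = 1%:R *: (Xf 0%N ^+ 0 * Xf 1%N ^+ 0 * Xf 2%N ^+ 1) :> poly3.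
Proof. by rewrite d2X. Qed.

Lemma DD_9_1_1 : mderiv (inord 1%N) (mderiv (inord 1%N) 'X_[mon 9%N]) = 0%:R *: (Xf 0%N ^+ 1 * Xf 1%N ^+ 0 * Xf 2%N ^+ 1) :> poly3.
Proof. by rewrite d2X. Qed.

Lemma DD_9_1_2 : mderiv (inord 1%N) (mderiv (inord 2%N) 'X_[mon 9%N]) = 1%:R *: (Xf 0%N ^+ 1 * Xf 1%N ^+ 0 * Xf 2%N ^+ 0) :> poly3.
Proof. by rewrite d2X. Qed.

Lemma DD_9_2_0 : mderiv (inord 2%N) (mderiv (inord 0%N) 'X_[mon 9%N]) = 1%:R *: (Xf 0%N ^+ 0 * Xf 1%N ^+ 1 * Xf 2%N ^+ 0) :> poly3.
Proof. by rewrite d2X. Qed.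

Lemma DD_9_2_1 : mderiv (inord 2%N) (mderiv (inord 1%N) 'X_[mon 9%N]) = 1%:R *: (Xf 0%N ^+ 1 * Xf 1%N ^+ 0 * Xf 2%N ^+ 0) :> poly3.
Proof. by rewrite d2X. Qed.

Lemma DD_9_2_2 : mderiv (inord 2%N) (mderiv (inord 2%N) 'X_[mon 9%N]) = 0%:R *: (Xf 0%N ^+ 1 * Xf 1%N ^+ 1 * Xf 2%N ^+ 0) :> poly3.
Proof. by rewrite d2X. Qed.

Opaque mon.
Lemma E00 (a : nat -> CC) : mderiv (inord 0%N) (mderiv (inord 0%N) (hp a)) = ((6 * (a 0%N)))%:MP * Xf 0%N + ((2 * (a 3%N)))%:MP * Xf 1%N + ((2 * (a 4%N)))%:MP * Xf 2%N.
Proof. rewrite dd_hp sumI !inordK // DD_0_0_0 DD_1_0_0 DD_2_0_0 DD_3_0_0 DD_4_0_0 DD_5_0_0 DD_6_0_0 DD_7_0_0 DD_8_0_0 DD_9_0_0; rewrite -!mul_mpolyC; ring. Qed.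

Lemma E01 (a : nat -> CC) : mderiv (inord 0%N) (mderiv (inord 1%N) (hp a)) = ((2 * (a 3%N)))%:MP * Xf 0%N + ((2 * (a 5%N)))%:MP * Xf 1%N + ((1 * (a 9%N)))%:MP * Xf 2%N.
Proof. rewrite dd_hp sumI !inordK // DD_0_0_1 DD_1_0_1 DD_2_0_1 DD_3_0_1 DD_4_0_1 DD_5_0_1 DD_6_0_1 DD_7_0_1 DD_8_0_1 DD_9_0_1; rewrite -!mul_mpolyC; ring. Qed.

Lemma E02 (a : nat -> CC) : mderiv (inord 0%N) (mderiv (inord 2%N) (hp a)) = ((2 * (a 4%N)))%:MP * Xf 0%N + ((1 * (a 9%N)))%:MP * Xf 1%N + ((2 * (a 7%N)))%:MP * Xf 2%N.
Proof. rewrite dd_hp sumI !inordK // DD_0_0_2 DD_1_0_2 DD_2_0_2 DD_3_0_2 DD_4_0_2 DD_5_0_2 DD_6_0_2 DD_7_0_2 DD_8_0_2 DD_9_0_2; rewrite -!mul_mpolyC; ring. Qed.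

Lemma E10 (a : nat -> CC) : mderiv (inord 1%N) (mderiv (inord 0%N) (hp a)) = ((2 * (a 3%N)))%:MP * Xf 0%N + ((2 * (a 5%N)))%:MP * Xf 1%N + ((1 * (a 9%N)))%:MP * Xf 2%N.
Proof. by rewrite mderiv_comm E01. Qed.

Lemma E11 (a : nat -> CC) : mderiv (inord 1%N) (mderiv (inord 1%N) (hp a)) = ((2 * (a 5%N)))%:MP * Xf 0%N + ((6 * (a 1%N)))%:MP * Xf 1%N + ((2 * (a 6%N)))%:MP * Xf 2%N.
Proof. rewrite dd_hp sumI !inordK // DD_0_1_1 DD_1_1_1 DD_2_1_1 DD_3_1_1 DD_4_1_1 DD_5_1_1 DD_6_1_1 DD_7_1_1 DD_8_1_1 DD_9_1_1; rewrite -!mul_mpolyC; ring. Qed.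

Lemma E12 (a : nat -> CC) : mderiv (inord 1%N) (mderiv (inord 2%N) (hp a)) = ((1 * (a 9%N)))%:MP * Xf 0%N + ((2 * (a 6%N)))%:MP * Xf 1%N + ((2 * (a 8%N)))%:MP * Xf 2%N.
Proof. rewrite dd_hp sumI !inordK // DD_0_1_2 DD_1_1_2 DD_2_1_2 DD_3_1_2 DD_4_1_2 DD_5_1_2 DD_6_1_2 DD_7_1_2 DD_8_1_2 DD_9_1_2; rewrite -!mul_mpolyC; ring. Qed.

Lemma E20 (a : nat -> CC) : mderiv (inord 2%N) (mderiv (inord 0%N) (hp a)) = ((2 * (a 4%N)))%:MP * Xf 0%N + ((1 * (a 9%N)))%:MP * Xf 1%N + ((2 * (a 7%N)))%:MP * Xf 2%N.
Proof. by rewrite mderiv_comm E02. Qed.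

Lemma E21 (a : nat -> CC) : mderiv (inord 2%N) (mderiv (inord 1%N) (hp a)) = ((1 * (a 9%N)))%:MP * Xf 0%N + ((2 * (a 6%N)))%:MP * Xf 1%N + ((2 * (a 8%N)))%:MP * Xf 2%N.
Proof. by rewrite mderiv_comm E12. Qed.

Lemma E22 (a : nat -> CC) : mderiv (inord 2%N) (mderiv (inord 2%N) (hp a)) = ((2 * (a 7%N)))%:MP * Xf 0%N + ((2 * (a 8%N)))%:MP * Xf 1%N + ((6 * (a 2%N)))%:MP * Xf 2%N.
Proof. rewrite dd_hp sumI !inordK // DD_0_2_2 DD_1_2_2 DD_2_2_2 DD_3_2_2 DD_4_2_2 DD_5_2_2 DD_6_2_2 DD_7_2_2 DD_8_2_2 DD_9_2_2; rewrite -!mul_mpolyC; ring. Qed.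

Transparent mon.
Definition Hv (a : nat -> CC) (k : nat) : CC :=
  match k with
  | 0 => (- 8 * (a 4%N) * (a 4%N) * (a 5%N) + 8 * (a 3%N) * (a 4%N) * (a 9%N) - 8 * (a 3%N) * (a 3%N) * (a 7%N) - 6 * (a 0%N) * (a 9%N) * (a 9%N) + 24 * (a 0%N) * (a 5%N) * (a 7%N))
  | 1 => (8 * (a 5%N) * (a 6%N) * (a 9%N) - 8 * (a 5%N) * (a 5%N) * (a 8%N) - 8 * (a 3%N) * (a 6%N) * (a 6%N) - 6 * (a 1%N) * (a 9%N) * (a 9%N) + 24 * (a 1%N) * (a 3%N) * (a 8%N))
  | 2 => (8 * (a 7%N) * (a 8%N) * (a 9%N) - 8 * (a 6%N) * (a 7%N) * (a 7%N) - 8 * (a 4%N) * (a 8%N) * (a 8%N) - 6 * (a 2%N) * (a 9%N) * (a 9%N) + 24 * (a 2%N) * (a 4%N) * (a 6%N))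
  | 3 => (2 * (a 3%N) * (a 9%N) * (a 9%N) - 8 * (a 3%N) * (a 5%N) * (a 7%N) + 16 * (a 3%N) * (a 4%N) * (a 6%N) - 8 * (a 3%N) * (a 3%N) * (a 8%N) - 24 * (a 1%N) * (a 4%N) * (a 4%N) - 24 * (a 0%N) * (a 6%N) * (a 9%N) + 24 * (a 0%N) * (a 5%N) * (a 8%N) + 72 * (a 0%N) * (a 1%N) * (a 7%N))
  | 4 => (2 * (a 4%N) * (a 9%N) * (a 9%N) - 8 * (a 4%N) * (a 5%N) * (a 7%N) - 8 * (a 4%N) * (a 4%N) * (a 6%N) + 16 * (a 3%N) * (a 4%N) * (a 8%N) - 24 * (a 2%N) * (a 3%N) * (a 3%N) - 24 * (a 0%N) * (a 8%N) * (a 9%N) + 24 * (a 0%N) * (a 6%N) * (a 7%N) + 72 * (a 0%N) * (a 2%N) * (a 5%N))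
  | 5 => (2 * (a 5%N) * (a 9%N) * (a 9%N) - 8 * (a 5%N) * (a 5%N) * (a 7%N) + 16 * (a 4%N) * (a 5%N) * (a 6%N) - 8 * (a 3%N) * (a 5%N) * (a 8%N) - 24 * (a 1%N) * (a 4%N) * (a 9%N) + 24 * (a 1%N) * (a 3%N) * (a 7%N) - 24 * (a 0%N) * (a 6%N) * (a 6%N) + 72 * (a 0%N) * (a 1%N) * (a 8%N))
  | 6 => (2 * (a 6%N) * (a 9%N) * (a 9%N) + 16 * (a 5%N) * (a 6%N) * (a 7%N) - 8 * (a 4%N) * (a 6%N) * (a 6%N) - 8 * (a 3%N) * (a 6%N) * (a 8%N) - 24 * (a 2%N) * (a 5%N) * (a 5%N) - 24 * (a 1%N) * (a 7%N) * (a 9%N) + 24 * (a 1%N) * (a 4%N) * (a 8%N) + 72 * (a 1%N) * (a 2%N) * (a 3%N))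
  | 7 => (2 * (a 7%N) * (a 9%N) * (a 9%N) - 8 * (a 5%N) * (a 7%N) * (a 7%N) - 8 * (a 4%N) * (a 6%N) * (a 7%N) + 16 * (a 3%N) * (a 7%N) * (a 8%N) + 24 * (a 2%N) * (a 4%N) * (a 5%N) - 24 * (a 2%N) * (a 3%N) * (a 9%N) - 24 * (a 0%N) * (a 8%N) * (a 8%N) + 72 * (a 0%N) * (a 2%N) * (a 6%N))
  | 8 => (2 * (a 8%N) * (a 9%N) * (a 9%N) + 16 * (a 5%N) * (a 7%N) * (a 8%N) - 8 * (a 4%N) * (a 6%N) * (a 8%N) - 8 * (a 3%N) * (a 8%N) * (a 8%N) - 24 * (a 2%N) * (a 5%N) * (a 9%N) + 24 * (a 2%N) * (a 3%N) * (a 6%N) - 24 * (a 1%N) * (a 7%N) * (a 7%N) + 72 * (a 1%N) * (a 2%N) * (a 4%N))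
  | _ => (2 * (a 9%N) * (a 9%N) * (a 9%N) - 8 * (a 5%N) * (a 7%N) * (a 9%N) - 8 * (a 4%N) * (a 6%N) * (a 9%N) + 24 * (a 4%N) * (a 5%N) * (a 8%N) - 8 * (a 3%N) * (a 8%N) * (a 9%N) + 24 * (a 3%N) * (a 6%N) * (a 7%N) - 24 * (a 2%N) * (a 3%N) * (a 5%N) - 24 * (a 1%N) * (a 4%N) * (a 7%N) - 24 * (a 0%N) * (a 6%N) * (a 8%N) + 216 * (a 0%N) * (a 1%N) * (a 2%N))
  end.

Definition Bt (a : nat -> CC) (t : nat) : CC :=
  match t with
  | 0 => (1 * (a 9%N) - 2 * (a 7%N) - 2 * (a 5%N) + 6 * (a 0%N))
  | 1 => (1 * (a 9%N) - 2 * (a 8%N) - 2 * (a 3%N) + 6 * (a 1%N))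
  | 2 => (1 * (a 9%N) - 2 * (a 6%N) - 2 * (a 4%N) + 6 * (a 2%N))
  | 3 => (- 1 * (a 9%N) + 1 * (a 5%N) + 1 * (a 3%N))
  | 4 => (1 * (a 5%N) - 1 * (a 3%N))
  | 5 => (- 1 * (a 9%N) + 1 * (a 7%N) + 1 * (a 4%N))
  | 6 => (1 * (a 7%N) - 1 * (a 4%N))
  | 7 => (- 1 * (a 9%N) + 1 * (a 8%N) + 1 * (a 6%N))
  | 8 => (1 * (a 8%N) - 1 * (a 6%N))
  | _ => (1 * (a 9%N))
  end.

Definition vt (t : nat) : CC * CC * CC :=
  match t with
  | 0 => (1, 0, 0)
  | 1 => (0, 1, 0)
  | 2 => (0, 0, 1)
  | 3 => (1, 1, 0)
  | 4 => (1, (-1), 0)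
  | 5 => (1, 0, 1)
  | 6 => (1, 0, (-1))
  | 7 => (0, 1, 1)
  | 8 => (0, 1, (-1))
  | _ => (1, 1, 1)
  end.

Definition vecn (t j : nat) : CC :=
  let: (p, q, r) := vt t in match j with 0 => p | 1 => q | _ => r end.
Definition vec (t : nat) : 'I_3 -> CC := fun j => vecn t j.
Definition L (t : nat) : poly3 := linform (vec t) ^+ 3.
Lemma LE t : L t = ((vecn t 0%N)%:MP * Xf 0%N + (vecn t 1%N)%:MP * Xf 1%N + (vecn t 2%N)%:MP * Xf 2%N) ^+ 3.
Proof. by rewrite /L linformE /vec !inordK // !mul_mpolyC. Qed.
Lemma L_cubic t : is_cubic (L t).
Proof. exact: linform_cubic. Qed.

Lemma L_0 : L 0 = ((1)%:MP * Xf 0%N + (0)%:MP * Xf 1%N + (0)%:MP * Xf 2%N) ^+ 3.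
Proof. exact: LE. Qed.

Lemma L_1 : L 1 = ((0)%:MP * Xf 0%N + (1)%:MP * Xf 1%N + (0)%:MP * Xf 2%N) ^+ 3.
Proof. exact: LE. Qed.

Lemma L_2 : L 2 = ((0)%:MP * Xf 0%N + (0)%:MP * Xf 1%N + (1)%:MP * Xf 2%N) ^+ 3.
Proof. exact: LE. Qed.

Lemma L_3 : L 3 = ((1)%:MP * Xf 0%N + (1)%:MP * Xf 1%N + (0)%:MP * Xf 2%N) ^+ 3.
Proof. exact: LE. Qed.

Lemma L_4 : L 4 = ((1)%:MP * Xf 0%N + ((-1))%:MP * Xf 1%N + (0)%:MP * Xf 2%N) ^+ 3.
Proof. exact: LE. Qed.

Lemma L_5 : L 5 = ((1)%:MP * Xf 0%N + (0)%:MP * Xf 1%N + (1)%:MP * Xf 2%N) ^+ 3.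
Proof. exact: LE. Qed.

Lemma L_6 : L 6 = ((1)%:MP * Xf 0%N + (0)%:MP * Xf 1%N + ((-1))%:MP * Xf 2%N) ^+ 3.
Proof. exact: LE. Qed.

Lemma L_7 : L 7 = ((0)%:MP * Xf 0%N + (1)%:MP * Xf 1%N + (1)%:MP * Xf 2%N) ^+ 3.
Proof. exact: LE. Qed.

Lemma L_8 : L 8 = ((0)%:MP * Xf 0%N + (1)%:MP * Xf 1%N + ((-1))%:MP * Xf 2%N) ^+ 3.
Proof. exact: LE. Qed.

Lemma L_9 : L 9 = ((1)%:MP * Xf 0%N + (1)%:MP * Xf 1%N + (1)%:MP * Xf 2%N) ^+ 3.
Proof. exact: LE. Qed.

Lemma span6 (a : nat -> CC) : 6 *: hp a = \sum_(t < 10) Bt a t *: L t.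
Proof.
rewrite sumI !inordK // L_0 L_1 L_2 L_3 L_4 L_5 L_6 L_7 L_8 L_9 hpE.
cbv beta iota delta [Bt].
rewrite -!mul_mpolyC; ring.
Qed.

Lemma hessian_hp (a : nat -> CC) : hessian (hp a) = hp (Hv a).
Proof.
rewrite /hessian det33 !mxE E00 E01 E02 E10 E11 E12 E20 E21 E22 [RHS]hpE.
cbv beta iota delta [Hv].
ring.
Qed.

Lemma Dform (t u v : nat) : det3 (vec t) (vec u) (vec v) =
  vecn t 0%N * vecn u 1%N * vecn v 2%N + vecn t 1%N * vecn u 2%N * vecn v 0%N
  + vecn t 2%N * vecn u 0%N * vecn v 1%N - vecn t 2%N * vecn u 1%N * vecn v 0%N
  - vecn t 0%N * vecn u 2%N * vecn v 1%N - vecn t 1%N * vecn u 0%N * vecn v 2%N.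
Proof. by rewrite det3E /vec !inordK. Qed.

Lemma inner10 (x e2 z : CC) (b : nat -> CC) (t v : nat) :
  \sum_(u < 10) x * (e2 * Bt b u) * z * det3 (vec t) (vec u) (vec v) ^+ 3 =
  x * (e2 * Bt b 0%N) * z * det3 (vec t) (vec 0%N) (vec v) ^+ 3 + x * (e2 * Bt b 1%N) * z * det3 (vec t) (vec 1%N) (vec v) ^+ 3 + x * (e2 * Bt b 2%N) * z * det3 (vec t) (vec 2%N) (vec v) ^+ 3 + x * (e2 * Bt b 3%N) * z * det3 (vec t) (vec 3%N) (vec v) ^+ 3 + x * (e2 * Bt b 4%N) * z * det3 (vec t) (vec 4%N) (vec v) ^+ 3 + x * (e2 * Bt b 5%N) * z * det3 (vec t) (vec 5%N) (vec v) ^+ 3 + x * (e2 * Bt b 6%N) * z * det3 (vec t) (vec 6%N) (vec v) ^+ 3 + x * (e2 * Bt b 7%N) * z * det3 (vec t) (vec 7%N) (vec v) ^+ 3 + x * (e2 * Bt b 8%N) * z * det3 (vec t) (vec 8%N) (vec v) ^+ 3 + x * (e2 * Bt b 9%N) * z * det3 (vec t) (vec 9%N) (vec v) ^+ 3.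
Proof. exact: (sum10 _ (fun u => x * (e2 * Bt b u) * z * det3 (vec t) (vec u) (vec v) ^+ 3)). Qed.

Lemma key (a : nat -> CC) (e1 e2 z : CC) (v : nat) : (v < 10)%N ->
  \sum_(t < 10) \sum_(u < 10) (e1 * Bt a t) * (e2 * Bt (Hv a) u) * z * det3 (vec t) (vec u) (vec v) ^+ 3 = 0.
Proof.
move=> Hv10.
rewrite (sum10 _ (fun t => \sum_(u < 10) (e1 * Bt a t) * (e2 * Bt (Hv a) u) * z * det3 (vec t) (vec u) (vec v) ^+ 3)).
rewrite !inner10 !Dform.
case: v Hv10 => [|[|[|[|[|[|[|[|[|[|//]]]]]]]]]] _;
  cbv beta iota delta [Bt Hv vecn vt]; ring.
Qed.

Lemma six_neq0 : (6 : CC) != 0.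
Proof. by rewrite pnatr_eq0. Qed.

Lemma spanI (b : nat -> CC) : hp b = \sum_(t < 10) (6^-1 * Bt b t) *: L t.
Proof.
have E : hp b = 6^-1 *: (6 *: hp b) by rewrite scalerA mulVf ?scale1r // six_neq0.
rewrite {1}E span6 scaler_sumr.
by apply: eq_bigr => t _; rewrite scalerA.
Qed.

Ltac cub := repeat first [ assumption | apply: is_cubicZ | apply: is_cubicD
  | apply: is_cubic_sum => ? | exact: hp_cubic | exact: L_cubic | exact: is_cubic0 ].

Section RS.
Variable R : poly3 -> poly3 -> poly3 -> CC.
Hypothesis R_lin1 : forall (a : CC) (f f' g c : poly3),
      is_cubic f -> is_cubic f' -> is_cubic g -> is_cubic c ->
      R (a *: f + f') g c = a * R f g c + R f' g c.
Hypothesis R_lin2 : forall (a : CC) (f g g' c : poly3),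
      is_cubic f -> is_cubic g -> is_cubic g' -> is_cubic c ->
      R f (a *: g + g') c = a * R f g c + R f g' c.
Hypothesis R_lin3 : forall (a : CC) (f g c c' : poly3),
      is_cubic f -> is_cubic g -> is_cubic c -> is_cubic c' ->
      R f g (a *: c + c') = a * R f g c + R f g c'.
Hypothesis R_alt : forall f g c : poly3,
      is_cubic f -> is_cubic g -> is_cubic c ->
      (f = g \/ g = c \/ f = c) -> R f g c = 0.
Hypothesis R_cube : forall l m n : 'I_3 -> CC,
      R (linform l ^+ 3) (linform m ^+ 3) (linform n ^+ 3) = det3 l m n ^+ 3.

Lemma x_eq0 (x : CC) : x = 1 * x + x -> x = 0.
Proof. rewrite mul1r => H; have := congr1 (fun y => y - x) H; by rewrite /= subrr addrK => ->. Qed.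

Lemma R0_1 g c : is_cubic g -> is_cubic c -> R 0 g c = 0.
Proof.
move=> Hg Hc; apply: x_eq0.
by rewrite -{1}(R_lin1 1 0 0 g c is_cubic0 is_cubic0 Hg Hc) scaler0 addr0.
Qed.
Lemma R0_2 f c : is_cubic f -> is_cubic c -> R f 0 c = 0.
Proof.
move=> Hf Hc; apply: x_eq0.
by rewrite -{1}(R_lin2 1 f 0 0 c Hf is_cubic0 is_cubic0 Hc) scaler0 addr0.
Qed.
Lemma R0_3 f g : is_cubic f -> is_cubic g -> R f g 0 = 0.
Proof.
move=> Hf Hg; apply: x_eq0.
by rewrite -{1}(R_lin3 1 f g 0 0 Hf Hg is_cubic0 is_cubic0) scaler0 addr0.
Qed.

Lemma R1D f f' g c : is_cubic f -> is_cubic f' -> is_cubic g -> is_cubic c ->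
  R (f + f') g c = R f g c + R f' g c.
Proof. by move=> *; rewrite -[f]scale1r R_lin1 // mul1r scale1r. Qed.
Lemma R2D f g g' c : is_cubic f -> is_cubic g -> is_cubic g' -> is_cubic c ->
  R f (g + g') c = R f g c + R f g' c.
Proof. by move=> *; rewrite -[g]scale1r R_lin2 // mul1r scale1r. Qed.
Lemma R3D f g c c' : is_cubic f -> is_cubic g -> is_cubic c -> is_cubic c' ->
  R f g (c + c') = R f g c + R f g c'.
Proof. by move=> *; rewrite -[c]scale1r R_lin3 // mul1r scale1r. Qed.
Lemma R1Z a f g c : is_cubic f -> is_cubic g -> is_cubic c -> R (a *: f) g c = a * R f g c.
Proof. by move=> Hf Hg Hc; rewrite -[a *: f]addr0 R_lin1 // ?R0_1 ?addr0 //; exact: is_cubic0. Qed.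
Lemma R2Z a f g c : is_cubic f -> is_cubic g -> is_cubic c -> R f (a *: g) c = a * R f g c.
Proof. by move=> Hf Hg Hc; rewrite -[a *: g]addr0 R_lin2 // ?R0_2 ?addr0 //; exact: is_cubic0. Qed.
Lemma R3Z a f g c : is_cubic f -> is_cubic g -> is_cubic c -> R f g (a *: c) = a * R f g c.
Proof. by move=> Hf Hg Hc; rewrite -[a *: c]addr0 R_lin3 // ?R0_3 ?addr0 //; exact: is_cubic0. Qed.

Lemma Ranti f g c : is_cubic f -> is_cubic g -> is_cubic c -> R g f c = - R f g c.
Proof.
move=> Hf Hg Hc.
have Hfg : is_cubic (f + g) by exact: is_cubicD.
have := R_alt _ _ _ Hfg Hfg Hc (or_introl erefl).
rewrite R1D // !R2D // (R_alt _ _ _ Hf Hf Hc (or_introl erefl)) (R_alt _ _ _ Hg Hg Hc (or_introl erefl)).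
rewrite add0r addr0 => /eqP; rewrite addr_eq0 => /eqP ->; by rewrite opprK.
Qed.

Lemma pencil (al be al' be' : CC) u w c : is_cubic u -> is_cubic w -> is_cubic c ->
  R (al *: u + be *: w) (al' *: u + be' *: w) c = (al * be' - al' * be) * R u w c.
Proof.
move=> Hu Hw Hc.
have Hu' := is_cubicZ al _ Hu. have Hw' := is_cubicZ be _ Hw.
have Hu'' := is_cubicZ al' _ Hu. have Hw'' := is_cubicZ be' _ Hw.
have Hs : is_cubic (al' *: u + be' *: w) by exact: is_cubicD.
rewrite R1D // R1Z // R1Z // !R2D // !R2Z //.
rewrite (R_alt _ _ _ Hu Hu Hc (or_introl erefl)) (R_alt _ _ _ Hw Hw Hc (or_introl erefl)).
rewrite (Ranti _ _ _ Hu Hw Hc).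
ring.
Qed.

Lemma Rsum1 (F : 'I_10 -> poly3) g c : (forall t, is_cubic (F t)) -> is_cubic g -> is_cubic c ->
  R (\sum_(t < 10) F t) g c = \sum_(t < 10) R (F t) g c.
Proof.
move=> HF Hg Hc.
have : is_cubic (\sum_(t < 10) F t) /\ R (\sum_(t < 10) F t) g c = \sum_(t < 10) R (F t) g c.
  apply: (big_rec2 (fun p q => is_cubic p /\ R p g c = q)) => [|t p q _ [Hp <-]].
    by split; [exact: is_cubic0 | exact: R0_1].
  by split; [exact: is_cubicD | exact: R1D].
by case.
Qed.
Lemma Rsum2 (F : 'I_10 -> poly3) f c : (forall t, is_cubic (F t)) -> is_cubic f -> is_cubic c ->
  R f (\sum_(t < 10) F t) c = \sum_(t < 10) R f (F t) c.
Proof.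
move=> HF Hf Hc.
have : is_cubic (\sum_(t < 10) F t) /\ R f (\sum_(t < 10) F t) c = \sum_(t < 10) R f (F t) c.
  apply: (big_rec2 (fun p q => is_cubic p /\ R f p c = q)) => [|t p q _ [Hp <-]].
    by split; [exact: is_cubic0 | exact: R0_2].
  by split; [exact: is_cubicD | exact: R2D].
by case.
Qed.
Lemma Rsum3 (F : 'I_10 -> poly3) f g : (forall t, is_cubic (F t)) -> is_cubic f -> is_cubic g ->
  R f g (\sum_(t < 10) F t) = \sum_(t < 10) R f g (F t).
Proof.
move=> HF Hf Hg.
have : is_cubic (\sum_(t < 10) F t) /\ R f g (\sum_(t < 10) F t) = \sum_(t < 10) R f g (F t).
  apply: (big_rec2 (fun p q => is_cubic p /\ R f g p = q)) => [|t p q _ [Hp <-]].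
    by split; [exact: is_cubic0 | exact: R0_3].
  by split; [exact: is_cubicD | exact: R3D].
by case.
Qed.

Lemma R_big (x y z : 'I_10 -> CC) :
  R (\sum_(t < 10) x t *: L t) (\sum_(u < 10) y u *: L u) (\sum_(v < 10) z v *: L v) =
  \sum_(t < 10) \sum_(u < 10) \sum_(v < 10)
     x t * y u * z v * det3 (vec t) (vec u) (vec v) ^+ 3.
Proof.
have HL : forall (w : 'I_10 -> CC) (t : 'I_10), is_cubic (w t *: L t).
  by move=> w t; apply: is_cubicZ; exact: L_cubic.
have HS : forall (w : 'I_10 -> CC), is_cubic (\sum_(t < 10) w t *: L t).
  by move=> w; apply: is_cubic_sum.
rewrite (Rsum1 _ _ _ (HL x) (HS y) (HS z)); apply: eq_bigr => t _.
rewrite (R1Z _ _ _ _ (L_cubic t) (HS y) (HS z)).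
rewrite (Rsum2 _ _ _ (HL y) (L_cubic t) (HS z)) mulr_sumr; apply: eq_bigr => u _.
rewrite (R2Z _ _ _ _ (L_cubic t) (L_cubic u) (HS z)).
rewrite (Rsum3 _ _ _ (HL z) (L_cubic t) (L_cubic u)) !mulr_sumr; apply: eq_bigr => v _.
rewrite (R3Z _ _ _ _ (L_cubic t) (L_cubic u) (L_cubic v)) /L R_cube.
by rewrite !mulrA.
Qed.

Lemma R_pencil_zero (a : nat -> CC) (c : poly3) : is_cubic c ->
  R (hp a) (hp (Hv a)) c = 0.
Proof.
move=> Hc.
rewrite (cubic_decomp _ Hc).
set cc := (fun k => c@_(mon k)).
rewrite !spanI R_big.
under eq_bigr do rewrite exchange_big.
rewrite exchange_big /=.
apply: big1 => v _.
by apply: key; exact: ltn_ord.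
Qed.

End RS.

Theorem mainTheorem2
  (R : poly3 -> poly3 -> poly3 -> CC)
  (R_lin1 : forall (a : CC) (f f' g c : poly3),
      is_cubic f -> is_cubic f' -> is_cubic g -> is_cubic c ->
      R (a *: f + f') g c = a * R f g c + R f' g c)
  (R_lin2 : forall (a : CC) (f g g' c : poly3),
      is_cubic f -> is_cubic g -> is_cubic g' -> is_cubic c ->
      R f (a *: g + g') c = a * R f g c + R f g' c)
  (R_lin3 : forall (a : CC) (f g c c' : poly3),
      is_cubic f -> is_cubic g -> is_cubic c -> is_cubic c' ->
      R f g (a *: c + c') = a * R f g c + R f g c')
  (R_alt : forall f g c : poly3,
      is_cubic f -> is_cubic g -> is_cubic c ->
      (f = g \/ g = c \/ f = c) -> R f g c = 0)
  (R_cube : forall l m n : 'I_3 -> CC,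
      R (linform l ^+ 3) (linform m ^+ 3) (linform n ^+ 3) = det3 l m n ^+ 3)
  (h : poly3) (h_cubic : is_cubic h) (hH : hessian h != 0)
  (f g : poly3)
  (hf : exists a b : CC, f = a *: h + b *: hessian h)
  (hg : exists a b : CC, g = a *: h + b *: hessian h) :
  forall c : poly3, is_cubic c -> R f g c = 0.
Proof.
move=> c Hc.
have HhE := cubic_decomp _ h_cubic.
set a := (fun k => h@_(mon k)) in HhE.
have HH : hessian h = hp (Hv a) by rewrite {1}HhE hessian_hp.
have cubH : is_cubic (hessian h) by rewrite HH; exact: hp_cubic.
case: hf => al [be ->]; case: hg => al' [be' ->].
rewrite (pencil R R_lin1 R_lin2 R_alt) //.
by rewrite HH {1}HhE (R_pencil_zero R R_lin1 R_lin2 R_lin3 R_cube a c Hc) mulr0.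
Qed.
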